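(* Let $\widehat Z\in\mathbb C^{dn_1\times dn_2}$ be a fixed block diagonal matrix and let $\Omega$ follow the Bernoulli model with parameter $p\in(0,1]$. Then with high probability $$\Big\|\Big(\tfrac1p\widehat{\mathcal G}\mathcal P_\Omega\widehat{\mathcal G}^*-\widehat{\mathcal G}\widehat{\mathcal G}^*\Big)\widehat Z\Big\|\le C\Big(\sqrt{\tfrac{\log(dn)}{p}}\,\|\widehat Z\|_{\widehat{\mathcal G},F}+\tfrac{\log(dn)}{p}\,\|\widehat Z\|_{\widehat{\mathcal G},\infty}\Big),$$ where $\|\cdot\|$ is the spectral norm and $C>0$ is an absolute constant.
   Context: Let $d,n\ge1$ with $n$ odd and $n_1=n_2=(n+1)/2$. For $a\in[n]$, $w_a=\#\{(j,k)\in[n_1]\times[n_2]:j+k=a+1\}$, $G_a=w_a^{-1/2}\sum_{j+k=a+1}e_je_k^{\mathsf T}$, $\mathcal G(x)=\sum_ax_aG_a$. $F$ is the $d\times d$ unitary DFT matrix. $\widehat{\mathcal G}$ maps $X\in\mathbb C^{d\times n}$ to the block diagonal matrix ($d$ blocks of size $n_1\times n_2$) whose $i$-th block is $\mathcal G$ of the $i$-th row of $FX$; $\widehat{\mathcal G}^*$ is its adjoint w.r.t. $\langle A,B\rangle=\mathrm{tr}(AB^{\mathsf H})$. $\widehat G_{j,k}=\widehat{\mathcal G}(e_je_k^{\mathsf T})=\mathrm{diag}(F_{1j}G_k,\dots,F_{dj}G_k)$. $\|\widehat Z\|_{\widehat{\mathcal G},F}=\big(\sum_{(j,k)\in[d]\times[n]}\frac1{dw_k}|\langle\widehat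 Z,\widehat G_{j,k}\rangle|^2\big)^{1/2}$ and $\|\widehat Z\|_{\widehat{\mathcal G},\infty}=\max_{(j,k)}\frac1{\sqrt{dw_k}}|\langle\widehat Z,\widehat G_{j,k}\rangle|$. $\mathcal P_\Omega$ keeps entries in $\Omega$ and zeroes the rest; Bernoulli model: each index in $\Omega$ independently with probability $p$. ''With high probability'': probability at least $1-c_1(dn)^{-c_2}$ for absolute constants $c_1,c_2>0$. *)

(* Defs.v *)
From Stdlib Require Import Reals ClassicalEpsilon.
From mathcomp Require Import all_boot.
Set Implicit Arguments. Unset Strict Implicit. Unset Printing Implicit Defensive.

Local Open Scope R_scope.

Record Cx := mkCx { Re : R; Im : R }.
Definition C0 : Cx := mkCx 0 0.
Definition C1 : Cx := mkCx 1 0.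
Definition RtoC (x : R) : Cx := mkCx x 0.
Definition Cadd (a b : Cx) : Cx := mkCx (Re a + Re b) (Im a + Im b).
Definition Copp (a : Cx) : Cx := mkCx (- Re a) (- Im a).
Definition Csub (a b : Cx) : Cx := Cadd a (Copp b).
Definition Cmul (a b : Cx) : Cx :=
  mkCx (Re a * Re b - Im a * Im b) (Re a * Im b + Im a * Re b).
Definition Cconj (a : Cx) : Cx := mkCx (Re a) (- Im a).
Definition Cnorm2 (a : Cx) : R := Re a * Re a + Im a * Im a.
Definition Cabs (a : Cx) : R := sqrt (Cnorm2 a).
Definition Cexpi (t : R) : Cx := mkCx (cos t) (sin t).

Definition Csum (T : finType) (f : T -> Cx) : Cx := \big[Cadd/C0]_(t : T) f t.
Definition Rsum (T : finType) (f : T -> R) : R := \big[Rplus/0]_(t : T) f t.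
Definition Rmaxf (T : finType) (f : T -> R) : R := \big[Rmax/0]_(t : T) f t.

Definition mat (I J : finType) := I -> J -> Cx.
Definition vec (I : finType) := I -> Cx.
Definition mat_vec (I J : finType) (A : mat I J) (v : vec J) : vec I :=
  fun i => Csum (fun j => Cmul (A i j) (v j)).
Definition vnorm (I : finType) (v : vec I) : R := sqrt (Rsum (fun i => Cnorm2 (v i))).
Definition minner (I J : finType) (A B : mat I J) : Cx :=
  Csum (fun ij : (I * J)%type => Cmul (A ij.1 ij.2) (Cconj (B ij.1 ij.2))).
Definition madd (I J : finType) (A B : mat I J) : mat I J := fun i j => Cadd (A i j) (B i j).
Definition msub (I J : finType) (A B : mat I J) : mat I J := fun i j => Csub (A i j) (B i j).
Definition mscale (I J : finType) (c : Cx) (A : mat I J) : mat I J := fun i j => Cmul c (A i j).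
Definition spec_norm_le (I J : finType) (A : mat I J) (r : R) : Prop :=
  forall v : vec J, vnorm (mat_vec A v) <= r * vnorm v.

(* n1 = n2 = (n+1)/2 ; all indices are 0-based *)
Definition n1 (n : nat) : nat := (n.+1)./2.

(* w_a = #{(j,k) in [n1]x[n2] : j+k = a}  (0-based version of j+k=a+1) *)
Definition wgt (n : nat) (a : 'I_n) : nat :=
  #|[set jk : ('I_(n1 n) * 'I_(n1 n))%type | (jk.1 + jk.2 == a)%N]|.

Definition Gmat (n : nat) (a : 'I_n) : mat 'I_(n1 n) 'I_(n1 n) :=
  fun j k => if (j + k == a)%N then RtoC (/ sqrt (INR (wgt a))) else C0.

Definition DFT (d : nat) (i j : 'I_d) : Cx :=
  Cmul (RtoC (/ sqrt (INR d))) (Cexpi (- 2 * PI * INR (i * j)%N / INR d)).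

(* block diagonal matrices in C^{d n1 x d n2}: rows indexed by (block, row),
   columns by (block, column) *)
Definition bmat (d n : nat) := mat (('I_d * 'I_(n1 n))%type) (('I_d * 'I_(n1 n))%type).
Definition is_block_diag (d n : nat) (Z : bmat d n) : Prop :=
  forall x y, x.1 <> y.1 -> Z x y = C0.

(* \hat G : C^{d x n} -> block diagonal matrices;
   i-th block is G(i-th row of F X) = sum_a (F X)_{i a} G_a *)
Definition Ghat (d n : nat) (X : mat 'I_d 'I_n) : bmat d n :=
  fun x y =>
    if x.1 == y.1 then
      Csum (fun a : 'I_n =>
              Cmul (Csum (fun j : 'I_d => Cmul (DFT x.1 j) (X j a)))
                   (Gmat a x.2 y.2))
    else C0.

Definition Ejk (d n : nat) (j : 'I_d) (k : 'I_n) : mat 'I_d 'I_n :=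
  fun j' k' => if (j' == j) && (k' == k) then C1 else C0.

Definition Ghat_jk (d n : nat) (j : 'I_d) (k : 'I_n) : bmat d n := Ghat (Ejk j k).

(* adjoint of \hat G w.r.t. <A,B> = tr(A B^H):
   (\hat G^* B)_{jk} = <B, \hat G_{j,k}> *)
Definition Ghat_adj (d n : nat) (B : bmat d n) : mat 'I_d 'I_n :=
  fun j k => minner B (Ghat_jk j k).

Definition POm (d n : nat) (Om : {set ('I_d * 'I_n)%type}) (X : mat 'I_d 'I_n) : mat 'I_d 'I_n :=
  fun j k => if (j, k) \in Om then X j k else C0.

Definition dev_op (d n : nat) (p : R) (Om : {set ('I_d * 'I_n)%type}) (Z : bmat d n) : bmat d n :=
  msub (mscale (RtoC (/ p)) (Ghat (POm Om (Ghat_adj Z)))) (Ghat (Ghat_adj Z)).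

Definition normGF (d n : nat) (Z : bmat d n) : R :=
  sqrt (Rsum (fun jk : ('I_d * 'I_n)%type =>
     / (INR d * INR (wgt jk.2)) * Cnorm2 (minner Z (Ghat_jk jk.1 jk.2)))).
Definition normGinf (d n : nat) (Z : bmat d n) : R :=
  Rmaxf (fun jk : ('I_d * 'I_n)%type =>
     / sqrt (INR d * INR (wgt jk.2)) * Cabs (minner Z (Ghat_jk jk.1 jk.2))).

Definition indic (P : Prop) : R :=
  if excluded_middle_informative P then 1 else 0.
(* probability that Omega (each (j,k) in [d]x[n] independently with prob p)
   satisfies E *)
Definition bern_prob (d n : nat) (p : R) (E : {set ('I_d * 'I_n)%type} -> Prop) : R :=
  \big[Rplus/0]_(Om : {set ('I_d * 'I_n)%type})
     (p ^ #|Om| * (1 - p) ^ ((d * n)%N - #|Om|)%N * indic (E Om)).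

(* Main.v *)
Set Warnings "-notation-overridden,-ambiguous-paths,-redundant-canonical-projection".
Require Import Defs.
From Stdlib Require Import Reals Lra Lia Psatz ZArith Classical ClassicalEpsilon.
From HB Require Import structures.
From mathcomp Require Import all_boot.
From mathcomp Require Import ssralg Rstruct zify.
Import Defs.
Set Implicit Arguments. Unset Strict Implicit. Unset Printing Implicit Defensive.
Local Open Scope R_scope.

Lemma Cx_ext (a b : Cx) : Re a = Re b -> Im a = Im b -> a = b.
Proof. by case: a b => ?? [??] /= -> ->. Qed.

Lemma CaddA : associative Cadd.
Proof. move=> a b c; apply: Cx_ext => /=; ring. Qed.
Lemma CaddC : commutative Cadd.
Proof. move=> a b; apply: Cx_ext => /=; ring. Qed.
Lemma Cadd0l : left_id C0 Cadd.
Proof. move=> a; apply: Cx_ext => /=; ring. Qed.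
Lemma CmulA : associative Cmul.
Proof. move=> a b c; apply: Cx_ext => /=; ring. Qed.
Lemma CmulC : commutative Cmul.
Proof. move=> a b; apply: Cx_ext => /=; ring. Qed.
Lemma Cmul1l : left_id C1 Cmul.
Proof. move=> a; apply: Cx_ext => /=; ring. Qed.
Lemma Cmul0l : forall a, Cmul C0 a = C0.
Proof. move=> a; apply: Cx_ext => /=; ring. Qed.
Lemma Cmul0r : forall a, Cmul a C0 = C0.
Proof. move=> a; apply: Cx_ext => /=; ring. Qed.
Lemma CmulDl : left_distributive Cmul Cadd.
Proof. move=> a b c; apply: Cx_ext => /=; ring. Qed.
Lemma CmulDr : right_distributive Cmul Cadd.
Proof. move=> a b c; apply: Cx_ext => /=; ring. Qed.

HB.instance Definition _ := Monoid.isComLaw.Build Cx C0 Cadd CaddA CaddC Cadd0l.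
HB.instance Definition _ := Monoid.isComLaw.Build Cx C1 Cmul CmulA CmulC Cmul1l.
HB.instance Definition _ := Monoid.isMulLaw.Build Cx C0 Cmul Cmul0l Cmul0r.
HB.instance Definition _ := Monoid.isAddLaw.Build Cx Cmul Cadd CmulDl CmulDr.


Lemma Cconj_add a b : Cconj (Cadd a b) = Cadd (Cconj a) (Cconj b).
Proof. apply: Cx_ext => /=; ring. Qed.
Lemma Cconj_mul a b : Cconj (Cmul a b) = Cmul (Cconj a) (Cconj b).
Proof. apply: Cx_ext => /=; ring. Qed.
Lemma Cconj0 : Cconj C0 = C0.
Proof. apply: Cx_ext => /=; ring. Qed.
Lemma Cconj_sum (I : finType) (F : I -> Cx) :
  Cconj (\big[Cadd/C0]_i F i) = \big[Cadd/C0]_i Cconj (F i).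
Proof. exact: (big_morph Cconj Cconj_add Cconj0). Qed.
Lemma Re_sum (I : finType) (P : pred I) (F : I -> Cx) :
  Re (\big[Cadd/C0]_(i | P i) F i) = \big[Rplus/0]_(i | P i) Re (F i).
Proof. by apply: (big_morph Re) => //. Qed.
Lemma Im_sum (I : finType) (P : pred I) (F : I -> Cx) :
  Im (\big[Cadd/C0]_(i | P i) F i) = \big[Rplus/0]_(i | P i) Im (F i).
Proof. by apply: (big_morph Im) => //. Qed.
Lemma Cnorm2E z : Cnorm2 z = Re (Cmul z (Cconj z)).
Proof. rewrite /Cnorm2 /=; ring. Qed.
Lemma Cnorm2_mul a b : Cnorm2 (Cmul a b) = Cnorm2 a * Cnorm2 b.
Proof. rewrite /Cnorm2 /=; ring. Qed.
Lemma Cnorm2_ge0 z : 0 <= Cnorm2 z.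
Proof. rewrite /Cnorm2; nra. Qed.
Lemma Cmul_cancel w s : w <> C0 -> Cmul w s = C0 -> s = C0.
Proof.
case: w s => [wr wi] [sr si] Hw [] /= H1 H2.
have Hp : 0 < wr * wr + wi * wi.
  case: (Req_dec wr 0) => [E1|E1]; last nra.
  case: (Req_dec wi 0) => [E2|E2]; last nra.
  by case: Hw; rewrite E1 E2.
have Hs : sr * (wr * wr + wi * wi) = 0.
  transitivity (wr * (wr * sr - wi * si) + wi * (wr * si + wi * sr)); first ring.
  by rewrite H1 H2; ring.
have Hi : si * (wr * wr + wi * wi) = 0.
  transitivity (wr * (wr * si + wi * sr) - wi * (wr * sr - wi * si)); first ring.
  by rewrite H1 H2; ring.
apply: Cx_ext => /=.
- by case: (Rmult_integral _ _ Hs) => //; lra.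
- by case: (Rmult_integral _ _ Hi) => //; lra.
Qed.
Lemma Cmul_RtoC a b z : Cmul (RtoC a) (Cmul (RtoC b) z) = Cmul (RtoC (a * b)) z.
Proof. apply: Cx_ext => /=; ring. Qed.

Definition EE (N k : nat) : Cx := Cexpi (2 * PI * INR k / INR N).

Lemma EE_add N a b : (0 < N)%nat -> EE N (a + b) = Cmul (EE N a) (EE N b).
Proof.
move=> HN; have HN' : INR N <> 0 by apply: not_0_INR; lia.
rewrite /EE /Cexpi; apply: Cx_ext => /=; rewrite plus_INR;
  (have -> : 2 * PI * (INR a + INR b) / INR N =
     2 * PI * INR a / INR N + 2 * PI * INR b / INR N by field);
  [rewrite cos_plus | rewrite sin_plus]; ring.
Qed.

Lemma EE_mulN N k : (0 < N)%nat -> EE N (N * k) = C1.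
Proof.
move=> HN; have HN' : INR N <> 0 by apply: not_0_INR; lia.
rewrite /EE /Cexpi.
have -> : 2 * PI * INR (N * k) / INR N = 0 + 2 * INR k * PI.
  rewrite mult_INR; field; auto.
by rewrite cos_period sin_period cos_0 sin_0.
Qed.

Lemma EE_conj N k : Cmul (EE N k) (Cconj (EE N k)) = C1.
Proof.
rewrite /EE /Cexpi; apply: Cx_ext => /=; last ring.
have := sin2_cos2 (2 * PI * INR k / INR N); rewrite /Rsqr; lra.
Qed.

Fixpoint Cpow (z : Cx) (k : nat) : Cx :=
  match k with O => C1 | S k' => Cmul (Cpow z k') z end.

Lemma geom_sum z K :
  Cmul (Csub z C1) (\big[Cadd/C0]_(r < K) Cpow z r) = Csub (Cpow z K) C1.
Proof.
elim: K => [|K IH].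
  rewrite big_ord0; apply: Cx_ext => /=; ring.
rewrite big_ord_recr /= CmulDr IH.
apply: Cx_ext => /=; ring.
Qed.

Lemma sum_const_C1 K : \big[Cadd/C0]_(r < K) C1 = RtoC (INR K).
Proof.
elim: K => [|K IH]; first by rewrite big_ord0; apply: Cx_ext => /=.
rewrite big_ord_recr IH S_INR; apply: Cx_ext => /=; ring.
Qed.

Lemma odd_split N : odd N -> N = (N./2 + N./2).+1.
Proof. by move=> H; rewrite -[in LHS](odd_double_half N) H addnn. Qed.

Lemma sin_frac_neq0 N a b : odd N -> (a < N)%nat -> (b < N)%nat -> a <> b ->
  sin (2 * PI * INR a / INR N - 2 * PI * INR b / INR N) <> 0.
Proof.
move=> Ho Ha Hb Hab H.
have HN : (0 < N)%nat by rewrite (odd_split Ho).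
have HN' : 0 < INR N by apply: lt_0_INR; lia.
case: (sin_eq_0_0 _ H) => k Hk.
have HPI := PI_RGT_0.
have E1 : 2 * (INR a - INR b) = IZR k * INR N.
  apply: (Rmult_eq_reg_r (PI / INR N)); last by apply: Rgt_not_eq; apply: Rdiv_lt_0_compat.
  rewrite [LHS](_ : _ = 2 * PI * INR a / INR N - 2 * PI * INR b / INR N); last by field; lra.
  rewrite Hk; field; lra.
rewrite !INR_IZR_INZ -minus_IZR -mult_IZR -mult_IZR in E1.
have E2 := eq_IZR _ _ E1.
have Eo := odd_split Ho.
move: Ha Hb Hab E2; rewrite Eo => Ha Hb Hab E2.
set q := N./2 in Ha Hb E2 Eo.
clear -Ha Hb Hab E2.
have : (k = 0 \/ k = 1 \/ k = -1 \/ k >= 2 \/ k <= -2)%Z by lia.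
case => [Hk1|[Hk1|[Hk1|[Hk1|Hk1]]]]; try (subst k; lia); nia.
Qed.

Lemma EE0 N : EE N 0 = C1.
Proof.
rewrite /EE /Cexpi /= Rmult_0_r /Rdiv Rmult_0_l cos_0 sin_0 //.
Qed.

Lemma Cpow_EE N a b r : (0 < N)%nat ->
  Cpow (Cmul (EE N a) (Cconj (EE N b))) r = Cmul (EE N (a * r)) (Cconj (EE N (b * r))).
Proof.
move=> HN; elim: r => [|r IH].
  rewrite !muln0 EE0; apply: Cx_ext => /=; ring.
rewrite /= IH !mulnS !EE_add // !Cconj_mul.
apply: Cx_ext => /=; ring.
Qed.

Lemma orth N a b : odd N -> (a < N)%nat -> (b < N)%nat ->
  \big[Cadd/C0]_(r < N) Cmul (EE N (a * r)) (Cconj (EE N (b * r)))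
  = if a == b then RtoC (INR N) else C0.
Proof.
move=> Ho Ha Hb.
have HN : (0 < N)%nat by rewrite (odd_split Ho).
case: eqP => [<-|Hab].
  rewrite -sum_const_C1; apply: eq_bigr => r _; exact: EE_conj.
set z := Cmul (EE N a) (Cconj (EE N b)).
rewrite (eq_bigr (fun r : 'I_N => Cpow z r)); last by move=> r _; rewrite Cpow_EE.
apply: (@Cmul_cancel (Csub z C1)).
  move=> Hz; have : Im (Csub z C1) = 0 by rewrite Hz.
  rewrite /z /EE /Cexpi /= => H.
  apply: (sin_frac_neq0 Ho Ha Hb Hab); rewrite sin_minus; lra.
rewrite geom_sum /z Cpow_EE // [(a * N)%nat]mulnC [(b * N)%nat]mulnC !EE_mulN //.
apply: Cx_ext => /=; ring.
Qed.

Lemma Rsum_le (I : finType) (P : pred I) (F G : I -> R) :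
  (forall i, P i -> F i <= G i) ->
  \big[Rplus/0]_(i | P i) F i <= \big[Rplus/0]_(i | P i) G i.
Proof.
move=> H; apply: (big_ind2 (fun x y => x <= y)) => //; first lra.
move=> *; lra.
Qed.
Lemma Rsum_ge0 (I : finType) (P : pred I) (F : I -> R) :
  (forall i, P i -> 0 <= F i) -> 0 <= \big[Rplus/0]_(i | P i) F i.
Proof.
move=> H; apply: (big_ind (fun x => 0 <= x)) => //; first lra.
move=> *; lra.
Qed.

Lemma Rsum_mull (I : finType) (P : pred I) (F : I -> R) c :
  c * \big[Rplus/0]_(i | P i) F i = \big[Rplus/0]_(i | P i) (c * F i).
Proof. exact: big_distrr. Qed.

Lemma sum_delta K c (F : nat -> Cx) x : (c < K)%nat ->
  \big[Cadd/C0]_(a < K) Cmul (F a) (if (a : nat) == c then RtoC x else C0)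
  = Cmul (F c) (RtoC x).
Proof.
move=> Hc; rewrite (bigD1 (Ordinal Hc)) //= eqxx big1.
  apply: Cx_ext => /=; ring.
move=> i Hi; case: eqP => [Hic|_]; last by apply: Cx_ext => /=; ring.
by case/eqP: Hi; apply: val_inj.
Qed.

Definition hh N (h : nat -> Cx) (m : nat) : Cx :=
  \big[Cadd/C0]_(a < N) Cmul (h a) (EE N (a * m)).
Definition VV N n1 (v : nat -> Cx) (m : nat) : Cx :=
  \big[Cadd/C0]_(s < n1) Cmul (v s) (Cconj (EE N (s * m))).

Lemma claim1 N n1 (h v : nat -> Cx) r : odd N -> (n1 + n1 = N.+1)%nat -> (r < n1)%nat ->
  \big[Cadd/C0]_(m < N) Cmul (Cmul (hh N h m) (VV N n1 v m)) (Cconj (EE N (r * m)))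
  = Cmul (RtoC (INR N)) (\big[Cadd/C0]_(s < n1) Cmul (h (r + s)%nat) (v s)).
Proof.
move=> Ho Hn Hr.
have HN : (0 < N)%nat by rewrite (odd_split Ho).
transitivity (\big[Cadd/C0]_(m < N) \big[Cadd/C0]_(a < N) \big[Cadd/C0]_(s < n1)
   Cmul (Cmul (Cmul (h a) (EE N (a * m))) (Cmul (v s) (Cconj (EE N (s * m)))))
        (Cconj (EE N (r * m)))).
  apply: eq_bigr => m _; rewrite /hh /VV big_distrl big_distrl; apply: eq_bigr => a _.
  by rewrite big_distrr big_distrl.
rewrite exchange_big.
under eq_bigr => a _ do rewrite exchange_big.
rewrite exchange_big big_distrr.
apply: eq_bigr => s _.
transitivity (\big[Cadd/C0]_(a < N) Cmul (Cmul (h a) (v s))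
   (\big[Cadd/C0]_(m < N) Cmul (EE N (a * m)) (Cconj (EE N ((r + s)%nat * m))))).
  apply: eq_bigr => a _; rewrite big_distrr; apply: eq_bigr => m _.
  rewrite mulnDl EE_add // Cconj_mul; apply: Cx_ext => /=; ring.
have Hrs : (r + s < N)%nat by have := ltn_ord s; lia.
under eq_bigr => a _ do rewrite orth //.
rewrite (sum_delta (fun a => Cmul (h a) (v s))) //.
apply: Cx_ext => /=; ring.
Qed.

Lemma Cnorm2_RtoC x : Cnorm2 (RtoC x) = x * x.
Proof. rewrite /Cnorm2 /=; ring. Qed.

Lemma claim2 N (z : nat -> Cx) : odd N ->
  \big[Rplus/0]_(r < N) Cnorm2 (\big[Cadd/C0]_(m < N) Cmul (z m) (Cconj (EE N (r * m))))
  = INR N * \big[Rplus/0]_(m < N) Cnorm2 (z m).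
Proof.
move=> Ho.
have HN : (0 < N)%nat by rewrite (odd_split Ho).
under eq_bigr => r _ do rewrite Cnorm2E Cconj_sum.
rewrite -Re_sum.
transitivity (Re (\big[Cadd/C0]_(m < N) \big[Cadd/C0]_(m' < N)
   Cmul (Cmul (z m) (Cconj (z m')))
     (\big[Cadd/C0]_(r < N) Cmul (EE N (m' * r)) (Cconj (EE N (m * r)))))).
  congr Re.
  transitivity (\big[Cadd/C0]_(r < N) \big[Cadd/C0]_(m < N) \big[Cadd/C0]_(m' < N)
     Cmul (Cmul (z m) (Cconj (z m'))) (Cmul (EE N (m' * r)) (Cconj (EE N (m * r))))).
    apply: eq_bigr => r _; rewrite big_distrl; apply: eq_bigr => m _.
    rewrite big_distrr; apply: eq_bigr => m' _.
    rewrite Cconj_mul [(r * m)%nat]mulnC [(r * m')%nat]mulnC.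
    case: (z m) (z m') (EE N (m * r)) (EE N (m' * r)) => [a b] [c e] [f g] [k l].
    apply: Cx_ext => /=; ring.
  rewrite exchange_big; apply: eq_bigr => m _.
  rewrite exchange_big; apply: eq_bigr => m' _.
  by rewrite big_distrr.
under eq_bigr => m _ do under eq_bigr => m' _ do rewrite orth //.
under eq_bigr => m _ do rewrite (sum_delta (fun m' => Cmul (z m) (Cconj (z m')))) //.
rewrite Re_sum Rsum_mull; apply: eq_bigr => m _.
rewrite Cnorm2E /=; ring.
Qed.

Definition vext n1 (v : nat -> Cx) (s : nat) : Cx := if (s < n1)%nat then v s else C0.

Lemma VV_wide N n1 v m : (n1 <= N)%nat ->
  VV N n1 v m = \big[Cadd/C0]_(s < N) Cmul (vext n1 v s) (Cconj (EE N (m * s))).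
Proof.
move=> Hle; rewrite /VV (big_ord_widen _ (fun s => Cmul (v s) (Cconj (EE N (s * m)))) Hle).
rewrite [LHS]big_mkcond; apply: eq_bigr => s _; rewrite /vext mulnC.
by case: ifP => // _; apply: Cx_ext => /=; ring.
Qed.

Lemma vext_sum N n1 v : (n1 <= N)%nat ->
  \big[Rplus/0]_(s < N) Cnorm2 (vext n1 v s) = \big[Rplus/0]_(s < n1) Cnorm2 (v s).
Proof.
move=> Hle; rewrite (big_ord_widen _ (fun s => Cnorm2 (v s)) Hle) [RHS]big_mkcond.
apply: eq_bigr => s _; rewrite /vext; case: ifP => //= _; rewrite /Cnorm2 /=; ring.
Qed.

Lemma Rsum_widen_le n1 N (F : nat -> R) : (n1 <= N)%nat -> (forall i, 0 <= F i) ->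
  \big[Rplus/0]_(r < n1) F r <= \big[Rplus/0]_(r < N) F r.
Proof.
move=> Hle H0; rewrite (big_ord_widen _ F Hle) big_mkcond.
apply: Rsum_le => i _; case: ifP => _; [lra | exact: H0].
Qed.

Lemma hankel N n1 (h v : nat -> Cx) M2 : odd N -> (n1 + n1 = N.+1)%nat -> 0 <= M2 ->
  (forall m, (m < N)%nat -> Cnorm2 (hh N h m) <= M2) ->
  \big[Rplus/0]_(r < n1) Cnorm2 (\big[Cadd/C0]_(s < n1) Cmul (h (r + s)%nat) (v s))
  <= M2 * \big[Rplus/0]_(s < n1) Cnorm2 (v s).
Proof.
move=> Ho Hn HM HM2.
have HN : (0 < N)%nat by rewrite (odd_split Ho).
have HNR : 0 < INR N by apply: lt_0_INR; lia.
have Hle : (n1 <= N)%nat by lia.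
apply: (Rmult_le_reg_l (INR N * INR N)); first nra.
rewrite Rsum_mull.
under eq_bigr => r _ do rewrite -Cnorm2_RtoC -Cnorm2_mul -(claim1 h v Ho Hn (ltn_ord r)).
apply: Rle_trans; first apply: (@Rsum_widen_le n1 N
   (fun r => Cnorm2 (\big[Cadd/C0]_(m < N) Cmul (Cmul (hh N h m) (VV N n1 v m))
                      (Cconj (EE N (r * m)))))) => //; first by move=> i; apply: Cnorm2_ge0.
rewrite (claim2 (fun m => Cmul (hh N h m) (VV N n1 v m)) Ho).
have E2 := claim2 (vext n1 v) Ho.
rewrite vext_sum // in E2.
have E3 : \big[Rplus/0]_(m < N) Cnorm2 (VV N n1 v m)
          = INR N * \big[Rplus/0]_(s < n1) Cnorm2 (v s).
  rewrite -E2; apply: eq_bigr => m _; by rewrite VV_wide.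
have E4 : \big[Rplus/0]_(m < N) Cnorm2 (Cmul (hh N h m) (VV N n1 v m))
          <= M2 * \big[Rplus/0]_(m < N) Cnorm2 (VV N n1 v m).
  rewrite Rsum_mull; apply: Rsum_le => m _; rewrite Cnorm2_mul.
  apply: Rmult_le_compat_r; [exact: Cnorm2_ge0 | exact: HM2].
rewrite E3 in E4.
have := Rmult_le_compat_l _ _ _ (Rlt_le _ _ HNR) E4; lra.
Qed.

Lemma exp_le x y : x <= y -> exp x <= exp y.
Proof. case/Rle_lt_or_eq_dec => [H|->]; [left; exact: exp_increasing | lra]. Qed.

Lemma exp_bound x : -1 <= x <= 1 -> exp x <= 1 + x + 3 * (x * x).
Proof.
move=> Hx.
have Hp := exp_pos x.
have H1 : (1 - x) * exp x <= 1.
  have := exp_ineq1_le (- x); rewrite exp_Ropp => H.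
  have : (1 + - x) * exp x <= / exp x * exp x by apply: Rmult_le_compat_r; lra.
  rewrite Rinv_l; lra.
have H2 := exp_ineq1_le x.
case: (Rle_lt_dec x 0) => Hs.
  have : x * exp x <= x * (1 + x) by nra.
  nra.
have H3 : exp x <= 3.
  apply: Rle_trans (exp_le_3); apply: exp_le; lra.
have : x * exp x <= x * (1 + x * exp x) by nra.
nra.
Qed.

Lemma mgf_factor p y : 0 < p <= 1 -> Rabs y <= p ->
  p * exp (y * (/ p - 1)) + (1 - p) * exp (- y) <= exp (3 * (y * y) / p).
Proof.
move=> Hp Hy.
have Hy' : - p <= y <= p by split; [have := Rabs_pos y; have := Rle_abs (- y); rewrite Rabs_Ropp | have := Rle_abs y]; lra.
have Hip : 0 < / p by apply: Rinv_0_lt_compat; lra.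
have Hx1 : -1 <= y * (/ p - 1) <= 1.
  have E : y * (/ p - 1) = (y / p) * (1 - p) by field; lra.
  have Hyp : -1 <= y / p <= 1.
    split; [apply: (Rmult_le_reg_r p) | apply: (Rmult_le_reg_r p)]; try lra;
    rewrite /Rdiv Rmult_assoc Rinv_l; lra.
  rewrite E; split; nra.
have B1 := exp_bound Hx1.
have B0 : exp (- y) <= 1 + - y + 3 * (- y * - y) by apply: exp_bound; lra.
apply: Rle_trans (_ : 1 + 3 * (y * y) / p <= _); last first.
  have := exp_ineq1_le (3 * (y * y) / p); lra.
have E : p * (1 + y * (/ p - 1) + 3 * (y * (/ p - 1) * (y * (/ p - 1))))
         + (1 - p) * (1 + - y + 3 * (- y * - y))
         = 1 + 3 * (y * y) / p - 3 * (y * y).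
  field; lra.
have Hyy : 0 <= y * y by nra.
have : p * exp (y * (/ p - 1)) <= p * (1 + y * (/ p - 1) + 3 * (y * (/ p - 1) * (y * (/ p - 1)))).
  apply: Rmult_le_compat_l; lra.
have : (1 - p) * exp (- y) <= (1 - p) * (1 + - y + 3 * (- y * - y)).
  apply: Rmult_le_compat_l; lra.
lra.
Qed.

Definition bprob (T : finType) (p : R) (E : {set T} -> Prop) : R :=
  \big[Rplus/0]_(Om : {set T}) (p ^ #|Om| * (1 - p) ^ (#|T| - #|Om|)%N * indic (E Om)).

Lemma iter_pow x k : iter k (Rmult x) 1 = x ^ k.
Proof. by elim: k => //= k ->. Qed.

Lemma weight_prod (T : finType) p (Om : {set T}) :
  p ^ #|Om| * (1 - p) ^ (#|T| - #|Om|)%N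
  = \big[Rmult/1]_(x : T) (if x \in Om then p else 1 - p).
Proof.
apply: esym; rewrite (bigID (fun x => x \in Om)) /=.
rewrite (eq_bigr (fun _ => p)); last by move=> x ->.
rewrite [X in _ * X](eq_bigr (fun _ => 1 - p)); last by move=> x /negbTE ->.
rewrite !big_const !iter_pow.
congr (_ ^ _ * _ ^ _).
have := cardC (mem Om); rewrite /= => <-.
by rewrite addKn.

Qed.

Lemma sum_prod (T : finType) (F G : T -> R) :
  \big[Rplus/0]_(Om : {set T}) \big[Rmult/1]_(x : T) (if x \in Om then F x else G x)
  = \big[Rmult/1]_(x : T) (F x + G x).
Proof. by rewrite bigA_distr. Qed.

Lemma indic_T (P : Prop) : P -> indic P = 1.
Proof. by rewrite /indic; case: excluded_middle_informative. Qed.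
Lemma indic_F (P : Prop) : ~ P -> indic P = 0.
Proof. by rewrite /indic; case: excluded_middle_informative. Qed.
Lemma indic_01 (P : Prop) : 0 <= indic P <= 1.
Proof. rewrite /indic; case: (excluded_middle_informative P) => ? /=; split; lra. Qed.

Lemma Rprod_ge0 (T : finType) (F : T -> R) : (forall x, 0 <= F x) ->
  0 <= \big[Rmult/1]_(x : T) F x.
Proof. move=> H; apply: (big_ind (fun x => 0 <= x)) => //; [lra | move=> *; nra]. Qed.

Lemma Rprod_le (T : finType) (F G : T -> R) : (forall x, 0 <= F x <= G x) ->
  \big[Rmult/1]_(x : T) F x <= \big[Rmult/1]_(x : T) G x.
Proof.
move=> H.
suff : 0 <= \big[Rmult/1]_(x : T) F x <= \big[Rmult/1]_(x : T) G x by case.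
apply: (big_ind2 (fun a b => 0 <= a <= b)); first lra.
  move=> a b c e [H1 H2] [H3 H4]; split; [nra | apply: Rmult_le_compat; lra].
by move=> x _; apply: H.
Qed.

Lemma weight_ge0 (T : finType) p (Om : {set T}) : 0 <= p <= 1 ->
  0 <= p ^ #|Om| * (1 - p) ^ (#|T| - #|Om|)%N.
Proof.
move=> Hp; rewrite weight_prod; apply: Rprod_ge0 => x; case: ifP => _; lra.
Qed.

Lemma mass1 (T : finType) p :
  \big[Rplus/0]_(Om : {set T}) (p ^ #|Om| * (1 - p) ^ (#|T| - #|Om|)%N) = 1.
Proof.
under eq_bigr => Om _ do rewrite weight_prod.
rewrite (sum_prod (fun _ => p) (fun _ => 1 - p)).
rewrite (eq_bigr (fun _ => 1)); last by move=> x _; ring.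
by rewrite big_const iter_pow pow1.
Qed.

Lemma bprob_le1 (T : finType) p E : 0 <= p <= 1 -> bprob (T:=T) p E <= 1.
Proof.
move=> Hp; rewrite -(mass1 T p) /bprob; apply: Rsum_le => Om _.
have := weight_ge0 Om Hp; have := indic_01 (E Om); nra.
Qed.

Lemma bprob_ge0 (T : finType) p E : 0 <= p <= 1 -> 0 <= bprob (T:=T) p E.
Proof.
move=> Hp; rewrite /bprob; apply: Rsum_ge0 => Om _.
have := weight_ge0 Om Hp; have := indic_01 (E Om); nra.
Qed.

Lemma Rsum_opp (I : finType) (F : I -> R) :
  - (\big[Rplus/0]_(i : I) F i) = \big[Rplus/0]_(i : I) - F i.
Proof. apply: (big_morph Ropp); [move=> *; ring | ring]. Qed.

Lemma bprob_union (T : finType) p (E : {set T} -> Prop) (I : finType) (F : I -> {set T} -> Prop) :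
  0 <= p <= 1 ->
  (forall Om, (forall i, ~ F i Om) -> E Om) ->
  1 - \big[Rplus/0]_(i : I) bprob p (F i) <= bprob p E.
Proof.
move=> Hp HE.
rewrite -{1}(mass1 T p) /bprob.
rewrite [X in _ - X]exchange_big /=.
have -> : forall (a b : R), a - b = a + - b by move=> *; ring.
rewrite Rsum_opp -big_split /=; apply: Rsum_le => Om _.
rewrite -Rsum_mull.
have Hw := weight_ge0 Om Hp.
set w := _ * _.
suff : 1 - \big[Rplus/0]_(i : I) indic (F i Om) <= indic (E Om).
  move=> H; have -> : w + - (w * \big[Rplus/0]_i indic (F i Om)) = w * (1 - \big[Rplus/0]_i indic (F i Om)) by ring.
  by apply: Rmult_le_compat_l.
case: (classic (exists i, F i Om)) => [[i Hi]|Hn].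
  rewrite (bigD1 i) //= indic_T //.
  have : 0 <= \big[Rplus/0]_(j | j != i) indic (F j Om) by apply: Rsum_ge0 => j _; case: (indic_01 (F j Om)).
  have := indic_01 (E Om); lra.
rewrite indic_T; last by apply: HE => i Hi; apply: Hn; exists i.
have : 0 <= \big[Rplus/0]_(j : I) indic (F j Om) by apply: Rsum_ge0 => j _; case: (indic_01 (F j Om)).
lra.
Qed.

Lemma exp_sum (T : finType) (F : T -> R) :
  exp (\big[Rplus/0]_(x : T) F x) = \big[Rmult/1]_(x : T) exp (F x).
Proof. apply: (big_morph exp); [exact: exp_plus | exact: exp_0]. Qed.

Lemma Rprod_mul (T : finType) (F G : T -> R) :
  \big[Rmult/1]_(x : T) F x * \big[Rmult/1]_(x : T) G x = \big[Rmult/1]_(x : T) (F x * G x).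
Proof. by rewrite big_split. Qed.

Lemma chernoff (T : finType) p (r : T -> R) A B L :
  0 < p <= 1 -> 0 <= A -> 0 <= B -> 0 <= L ->
  L * \big[Rplus/0]_(x : T) (r x * r x) <= p * (A * A) ->
  (forall x, L * Rabs (r x) <= p * B) ->
  bprob p (fun Om : {set T} =>
    6 * (A + B) < \big[Rplus/0]_(x : T) ((if x \in Om then / p - 1 else -1) * r x))
  <= exp (- (3 * L)).
Proof.
move=> Hp HA HB HL HQ Hr.
have Hp' : 0 <= p <= 1 by lra.
set S := fun Om : {set T} => \big[Rplus/0]_(x : T) ((if x \in Om then / p - 1 else -1) * r x).
case: (Req_dec (A + B) 0) => HAB.
  case: (Req_dec L 0) => HL0.
    rewrite HL0 Rmult_0_r Ropp_0 exp_0; exact: bprob_le1.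
  have Hr0 : forall x, r x = 0.
    move=> x; have := Hr x; have := Rabs_pos (r x).
    have : 0 < L by lra.
    move=> HL1 H1 H2.
    have : Rabs (r x) = 0 by nra.
    have := Rle_abs (r x); have := Rle_abs (- r x); rewrite Rabs_Ropp; lra.
  apply: Rle_trans (_ : _ <= \big[Rplus/0]_(Om : {set T}) 0) _.
    apply: Rsum_le => Om _; rewrite indic_F; first lra.
    rewrite big1; first lra.
    by move=> x _; rewrite Hr0; ring.
  rewrite big1_eq; left; exact: exp_pos.
have HAB' : 0 < A + B by lra.
set lam := L / (A + B).
have Hlam : 0 <= lam by apply: Rmult_le_pos; [lra | left; apply: Rinv_0_lt_compat].
have Hy : forall x, Rabs (lam * r x) <= p.
  move=> x; rewrite Rabs_mult (Rabs_pos_eq _ Hlam) /lam.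
  have := Hr x => H.
  apply: (Rmult_le_reg_l (A + B)) => //.
  have -> : (A + B) * (L / (A + B) * Rabs (r x)) = L * Rabs (r x) by field; lra.
  nra.
apply: Rle_trans (_ : _ <= \big[Rplus/0]_(Om : {set T})
   (p ^ #|Om| * (1 - p) ^ (#|T| - #|Om|)%N * exp (lam * (S Om - 6 * (A + B))))) _.
  apply: Rsum_le => Om _; apply: Rmult_le_compat_l; first exact: weight_ge0.
  case: (classic (6 * (A + B) < S Om)) => HS.
    rewrite indic_T //; have := exp_ineq1_le (lam * (S Om - 6 * (A + B))).
    have : 0 <= lam * (S Om - 6 * (A + B)) by apply: Rmult_le_pos; lra.
    lra.
  rewrite indic_F //; left; exact: exp_pos.
have E1 : forall Om : {set T},
    p ^ #|Om| * (1 - p) ^ (#|T| - #|Om|)%N * exp (lam * (S Om - 6 * (A + B)))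
    = exp (- (6 * L)) * \big[Rmult/1]_(x : T)
        (if x \in Om then p * exp (lam * r x * (/ p - 1)) else (1 - p) * exp (- (lam * r x))).
  move=> Om.
  have -> : lam * (S Om - 6 * (A + B)) = - (6 * L) + lam * S Om.
    rewrite /lam; field; lra.
  rewrite exp_plus /S Rsum_mull exp_sum weight_prod.
  set P1 := \big[Rmult/1]_(x : T) (if x \in Om then p else 1 - p).
  set P2 := \big[Rmult/1]_(x : T) exp (lam * ((if x \in Om then / p - 1 else -1) * r x)).
  transitivity (exp (- (6 * L)) * (P1 * P2)); first ring.
  congr (_ * _); rewrite /P1 /P2 Rprod_mul; apply: eq_bigr => x _.
  case: ifP => _; [congr (_ * exp _) | congr (_ * exp _)]; ring.
under eq_bigr => Om _ do rewrite E1.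
rewrite -Rsum_mull.
rewrite (sum_prod (fun x => p * exp (lam * r x * (/ p - 1))) (fun x => (1 - p) * exp (- (lam * r x)))).
apply: Rle_trans (_ : _ <= exp (- (6 * L)) * \big[Rmult/1]_(x : T) exp (3 * ((lam * r x) * (lam * r x)) / p)) _.
  apply: Rmult_le_compat_l; first by left; exact: exp_pos.
  apply: Rprod_le => x; split.
    have := exp_pos (lam * r x * (/ p - 1)); have := exp_pos (- (lam * r x)); nra.
  exact: mgf_factor.
rewrite -exp_sum -exp_plus; apply: exp_le.
have -> : \big[Rplus/0]_(x : T) (3 * (lam * r x * (lam * r x)) / p)
          = 3 * (lam * lam / p) * \big[Rplus/0]_(x : T) (r x * r x).
  rewrite Rsum_mull; apply: eq_bigr => x _; field; lra.
set Q := \big[Rplus/0]_(x : T) (r x * r x).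
have HQ0 : 0 <= Q by apply: Rsum_ge0 => x _; nra.
suff : lam * lam / p * Q <= L by lra.
have -> : lam * lam / p * Q = (L / ((A + B) * (A + B) * p)) * (L * Q).
  rewrite /lam; field; lra.
apply: Rle_trans (_ : _ <= (L / ((A + B) * (A + B) * p)) * (p * (A * A))) _.
  apply: Rmult_le_compat_l => //.
  apply: Rmult_le_pos; first exact: HL.
  left; apply: Rinv_0_lt_compat; apply: Rmult_lt_0_compat; [nra | lra].
have -> : L / ((A + B) * (A + B) * p) * (p * (A * A)) = L * (A * A / ((A + B) * (A + B))).
  field; lra.
have : A * A / ((A + B) * (A + B)) <= 1.
  apply: (Rmult_le_reg_r ((A + B) * (A + B))); first nra.
  rewrite /Rdiv Rmult_assoc Rinv_l; nra.
nra.
Qed.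

Lemma Copp_sum (I : finType) (F : I -> Cx) :
  Copp (\big[Cadd/C0]_(i : I) F i) = \big[Cadd/C0]_(i : I) Copp (F i).
Proof. apply: (big_morph Copp); [move=> *; apply: Cx_ext => /=; ring | apply: Cx_ext => /=; ring]. Qed.

Definition kap (d n : nat) (p : R) (Om : {set ('I_d * 'I_n)}) (x : 'I_d * 'I_n) : R :=
  if x \in Om then / p - 1 else -1.
Definition gg (d n : nat) (Z : bmat d n) (j : 'I_d) (a : 'I_n) : Cx := minner Z (Ghat_jk j a).
Definition cc (d n : nat) p Om (Z : bmat d n) (i : 'I_d) (a : 'I_n) : Cx :=
  \big[Cadd/C0]_(j : 'I_d) Cmul (RtoC (kap p Om (j, a))) (Cmul (DFT i j) (gg Z j a)).
Definition wi (n : nat) (a : 'I_n) : R := / sqrt (INR (wgt a)).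
Definition hfun (d n : nat) p Om (Z : bmat d n) (i : 'I_d) (t : nat) : Cx :=
  \big[Cadd/C0]_(a : 'I_n) (if (a : nat) == t then Cmul (cc p Om Z i a) (RtoC (wi a)) else C0).

Lemma dev_entry d n p Om (Z : bmat d n) i r i' s : p <> 0 ->
  dev_op p Om Z (i, r) (i', s) = if i == i' then hfun p Om Z i (r + s) else C0.
Proof.
move=> Hp0; rewrite /dev_op /msub /mscale /Ghat /=.
case: ifP => [/eqP Hii|_]; last by apply: Cx_ext => /=; ring.
subst i'.
rewrite /Csub /Csum big_distrr Copp_sum -big_split /hfun.
apply: eq_bigr => a _.
rewrite big_distrl big_distrl big_distrr Copp_sum -big_split /=.
case: eqP => [Ha|Ha].
  rewrite /cc big_distrl; apply: eq_bigr => j _.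
  rewrite /Gmat /POm /Ghat_adj /kap /gg /wi /= -Ha eqxx.
  by case: ifP => _; move: (DFT i j) (minner Z (Ghat_jk j a)) (/ sqrt (INR (wgt a))) => u v w;
    apply: Cx_ext => /=; field.
rewrite big1 // => j _.
rewrite /Gmat /=; case: eqP => [Hb|_]; first by case: Ha; rewrite -Hb.
apply: Cx_ext => /=; ring.
Qed.

Lemma sel_ord K (F : 'I_K -> Cx) (s : 'I_K) :
  \big[Cadd/C0]_(o : 'I_K) (if (o : nat) == s then F o else C0) = F s.
Proof.
rewrite (bigD1 s) //= eqxx big1; first by apply: Cx_ext => /=; ring.
move=> o Ho; case: eqP => // Hv; case/eqP: Ho; exact: val_inj.
Qed.

Lemma pairC (I J : finType) (F : I * J -> Cx) :
  \big[Cadd/C0]_(y : I * J) F y = \big[Cadd/C0]_(i : I) \big[Cadd/C0]_(j : J) F (i, j).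
Proof.
rewrite (pair_bigA _ (fun i j => F (i, j))); apply: eq_bigr => [[a b]] //.
Qed.
Lemma pairR (I J : finType) (F : I * J -> R) :
  \big[Rplus/0]_(y : I * J) F y = \big[Rplus/0]_(i : I) \big[Rplus/0]_(j : J) F (i, j).
Proof.
rewrite (pair_bigA _ (fun i j => F (i, j))); apply: eq_bigr => [[a b]] //.
Qed.

Lemma matvec_dev d n p Om (Z : bmat d n) (v : vec ('I_d * 'I_(n1 n))%type) i r : p <> 0 ->
  mat_vec (dev_op p Om Z) v (i, r)
  = \big[Cadd/C0]_(s : 'I_(n1 n)) Cmul (hfun p Om Z i (r + s)) (v (i, s)).
Proof.
move=> Hp0; rewrite /mat_vec /Csum pairC (bigD1 i) //= [X in Cadd _ X]big1.
  have -> : forall x, Cadd x C0 = x by move=> x; apply: Cx_ext => /=; ring.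
  by apply: eq_bigr => s _; rewrite dev_entry // eqxx.
move=> i' Hi'; apply: big1 => s _; rewrite dev_entry //.
case: eqP => [E|_]; first by rewrite E eqxx in Hi'.
apply: Cx_ext => /=; ring.
Qed.

Lemma n1_double n : odd n -> (n1 n + n1 n)%nat = n.+1.
Proof.
move=> Ho; rewrite /n1 {1 2 3}(odd_split Ho).
set q := n./2.
have -> : (q + q).+2 = (q.+1).*2 by rewrite -addnn addnS addSn.
by rewrite doubleK addnn.
Qed.

Lemma spec_from_hankel d n p Om (Z : bmat d n) M : odd n -> p <> 0 -> 0 <= M ->
  (forall i (m : nat), (m < n)%nat -> Cnorm2 (hh n (hfun p Om Z i) m) <= M * M) ->
  spec_norm_le (dev_op p Om Z) M.
Proof.
move=> Ho Hp0 HM Hb v.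
have key : Rsum (fun x => Cnorm2 (mat_vec (dev_op p Om Z) v x))
           <= (M * M) * Rsum (fun x => Cnorm2 (v x)).
  rewrite /Rsum pairR (pairR (fun x => Cnorm2 (v x))) Rsum_mull.
  apply: Rsum_le => i _.
  under eq_bigr => r _ do rewrite matvec_dev //.
  set vi := fun t : nat => \big[Cadd/C0]_(o : 'I_(n1 n)) (if (o : nat) == t then v (i, o) else C0).
  have Hvi : forall s : 'I_(n1 n), vi s = v (i, s) by move=> s; rewrite /vi sel_ord.
  have H := @hankel n (n1 n) (hfun p Om Z i) vi (M * M) Ho (n1_double Ho) (Rle_0_sqr M) (Hb i).
  under eq_bigr => r _ do under eq_bigr => s _ do rewrite -Hvi.
  apply: Rle_trans H _; right; congr (_ * _); apply: eq_bigr => s _; by rewrite Hvi.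
rewrite /vnorm.
apply: Rle_trans (sqrt_le_1_alt _ _ key) _.
rewrite sqrt_mult_alt; last exact: Rle_0_sqr.
rewrite sqrt_square //; lra.
Qed.

Definition beta d n (Z : bmat d n) (i : 'I_d) (m : nat) (x : ('I_d * 'I_n)%type) : Cx :=
  Cmul (Cmul (DFT i x.1) (gg Z x.1 x.2)) (Cmul (RtoC (wi x.2)) (EE n (x.2 * m))).

Lemma hh_expand d n p Om (Z : bmat d n) i m :
  hh n (hfun p Om Z i) m
  = \big[Cadd/C0]_(x : ('I_d * 'I_n)%type) Cmul (RtoC (kap p Om x)) (beta Z i m x).
Proof.
rewrite /hh.
under eq_bigr => a _ do rewrite /hfun sel_ord /cc big_distrl big_distrl.
rewrite exchange_big pairC; apply: eq_bigr => j _; apply: eq_bigr => a _.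
rewrite /beta /=.
move: (DFT i j) (gg Z j a) (RtoC (wi a)) (EE n (a * m)) (RtoC (kap p Om (j, a))) => u1 u2 u3 u4 u5.
apply: Cx_ext => /=; ring.
Qed.

Lemma Re_hh d n p Om (Z : bmat d n) i m :
  Re (hh n (hfun p Om Z i) m)
  = \big[Rplus/0]_(x : ('I_d * 'I_n)%type) (kap p Om x * Re (beta Z i m x)).
Proof.
rewrite hh_expand /Csum Re_sum; apply: eq_bigr => x _ /=; ring.
Qed.
Lemma Im_hh d n p Om (Z : bmat d n) i m :
  Im (hh n (hfun p Om Z i) m)
  = \big[Rplus/0]_(x : ('I_d * 'I_n)%type) (kap p Om x * Im (beta Z i m x)).
Proof.
rewrite hh_expand /Csum Im_sum; apply: eq_bigr => x _ /=; ring.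
Qed.

Lemma Rinv_ge0 x : 0 <= x -> 0 <= / x.
Proof. case/Rle_lt_or_eq_dec => [H|<-]; [left; exact: Rinv_0_lt_compat | rewrite Rinv_0; lra]. Qed.

Lemma Cnorm2_expi t : Cnorm2 (Cexpi t) = 1.
Proof. rewrite /Cnorm2 /=; have := sin2_cos2 t; rewrite /Rsqr; lra. Qed.

Lemma inv_sqrt_sq x : 0 <= x -> / sqrt x * / sqrt x = / x.
Proof. by move=> H; rewrite -Rinv_mult sqrt_sqrt. Qed.

Lemma Cnorm2_beta d n (Z : bmat d n) i m x :
  Cnorm2 (beta Z i m x) = / (INR d * INR (wgt x.2)) * Cnorm2 (gg Z x.1 x.2).
Proof.
rewrite /beta /DFT /EE !Cnorm2_mul !Cnorm2_RtoC !Cnorm2_expi /wi.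
rewrite Rinv_mult !inv_sqrt_sq; [ring | exact: pos_INR | exact: pos_INR].
Qed.

Lemma Cabs_beta d n (Z : bmat d n) i m x :
  Cabs (beta Z i m x) = / sqrt (INR d * INR (wgt x.2)) * Cabs (gg Z x.1 x.2).
Proof.
rewrite /Cabs Cnorm2_beta sqrt_mult_alt ?sqrt_inv //.
apply: Rinv_ge0; apply: Rmult_le_pos; exact: pos_INR.
Qed.

Lemma Rabs_le_Cabs_Re z : Rabs (Re z) <= Cabs z.
Proof.
rewrite -sqrt_Rsqr_abs /Cabs; apply: sqrt_le_1_alt; rewrite /Rsqr /Cnorm2.
have := Rle_0_sqr (Im z); rewrite /Rsqr; lra.
Qed.
Lemma Rabs_le_Cabs_Im z : Rabs (Im z) <= Cabs z.
Proof.
rewrite -sqrt_Rsqr_abs /Cabs; apply: sqrt_le_1_alt; rewrite /Rsqr /Cnorm2.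
have := Rle_0_sqr (Re z); rewrite /Rsqr; lra.
Qed.

Lemma bigmax_ub (T : finType) (f : T -> R) t : f t <= Rmaxf f.
Proof.
rewrite /Rmaxf.
have : t \in index_enum T by rewrite mem_index_enum.
elim: (index_enum T) => [//|y s IH].
rewrite inE big_cons => /orP [/eqP <-|Hs]; first exact: Rmax_l.
apply: Rle_trans (IH Hs) _; exact: Rmax_r.
Qed.

Lemma bigmax_ge0 (T : finType) (f : T -> R) : 0 <= Rmaxf f.
Proof.
rewrite /Rmaxf; elim: (index_enum T) => [|y s IH]; first by rewrite big_nil; lra.
rewrite big_cons; apply: Rle_trans IH (Rmax_r _ _).
Qed.

Lemma bern_probE d n p (E : {set ('I_d * 'I_n)%type} -> Prop) :
  bern_prob p E = bprob (T := ('I_d * 'I_n)%type) p E.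
Proof. by rewrite /bern_prob /bprob card_prod !card_ord. Qed.

Lemma iter_sum k c : iter k (Rplus c) 0 = INR k * c.
Proof. elim: k => [|k IH]; first by rewrite /=; ring. rewrite S_INR /= IH; ring. Qed.

Definition rrc (b1 b2 : bool) (z : Cx) : R :=
  (if b2 then -1 else 1) * (if b1 then Im z else Re z).
Definition rr d n (Z : bmat d n) (k : ('I_d * 'I_n) * bool * bool) (x : ('I_d * 'I_n)%type) : R :=
  rrc k.1.2 k.2 (beta Z k.1.1.1 k.1.1.2 x).

Lemma rrc_sq b1 b2 z : rrc b1 b2 z * rrc b1 b2 z <= Cnorm2 z.
Proof. rewrite /rrc /Cnorm2; case: b1; case: b2; nra. Qed.

Lemma rrc_abs b1 b2 z : Rabs (rrc b1 b2 z) <= Cabs z.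
Proof.
rewrite /rrc Rabs_mult.
have -> : Rabs (if b2 then -1 else 1) = 1 by case: b2; rewrite ?Rabs_Ropp Rabs_R1.
rewrite Rmult_1_l; case: b1; [exact: Rabs_le_Cabs_Im | exact: Rabs_le_Cabs_Re].
Qed.

Lemma rr_sq d n (Z : bmat d n) k x :
  rr Z k x * rr Z k x <= / (INR d * INR (wgt x.2)) * Cnorm2 (gg Z x.1 x.2).
Proof. rewrite -(Cnorm2_beta Z k.1.1.1 k.1.1.2); exact: rrc_sq. Qed.

Lemma rr_abs d n (Z : bmat d n) k x : Rabs (rr Z k x) <= normGinf Z.
Proof.
apply: Rle_trans (rrc_abs _ _ _) _.
rewrite Cabs_beta /normGinf; exact: (bigmax_ub (fun jk : ('I_d * 'I_n)%type =>
   / sqrt (INR d * INR (wgt jk.2)) * Cabs (minner Z (Ghat_jk jk.1 jk.2))) x).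
Qed.

Lemma normGF_sq d n (Z : bmat d n) :
  normGF Z * normGF Z = \big[Rplus/0]_(x : ('I_d * 'I_n)%type)
      (/ (INR d * INR (wgt x.2)) * Cnorm2 (gg Z x.1 x.2)).
Proof.
rewrite /normGF sqrt_sqrt //; apply: Rsum_ge0 => x _.
apply: Rmult_le_pos; last exact: Cnorm2_ge0.
apply: Rinv_ge0; apply: Rmult_le_pos; exact: pos_INR.
Qed.

Lemma sum_rr d n p (Om : {set ('I_d * 'I_n)%type}) (Z : bmat d n) (i : 'I_d) (m : 'I_n) b1 b2 :
  \big[Rplus/0]_(x : ('I_d * 'I_n)%type)
     ((if x \in Om then / p - 1 else -1) * rr Z ((i, m), b1, b2) x)
  = (if b2 then -1 else 1) *
    (if b1 then Im (hh n (hfun p Om Z i) m) else Re (hh n (hfun p Om Z i) m)).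
Proof.
rewrite /rr /rrc /=; case: b1; rewrite ?Re_hh ?Im_hh Rsum_mull;
  apply: eq_bigr => x _; rewrite /kap /beta /=; ring.
Qed.

Theorem lemma4p3 :
  exists C c1 c2 : R, 0 < C /\ 0 < c1 /\ 0 < c2 /\
  forall (d n : nat) (p : R) (Z : bmat d n),
    (0 < d)%nat -> odd n -> 0 < p <= 1 -> is_block_diag Z ->
    bern_prob p (fun Om : {set (('I_d * 'I_n)%type)} =>
      spec_norm_le (dev_op p Om Z)
        (C * (sqrt (ln (INR (d * n)%nat) / p) * normGF Z
              + ln (INR (d * n)%nat) / p * normGinf Z)))
    >= 1 - c1 * Rpower (INR (d * n)%nat) (- c2).
Proof.
exists 9, 4, 2; split; [lra | split; [lra | split; [lra |]]].
move=> d n p Z Hd Ho Hp _.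
have Hp0 : p <> 0 by lra.
have Hp' : 0 <= p <= 1 by lra.
have Hn : (0 < n)%nat by rewrite (odd_split Ho).
have HN1 : 1 <= INR (d * n).
  have : (1 <= d * n)%nat by rewrite muln_gt0 Hd Hn.
  by move/leP/le_INR.
set L := ln (INR (d * n)).
have HL : 0 <= L.
  case: (Rle_lt_or_eq_dec _ _ HN1) => H; last by rewrite /L -H ln_1; lra.
  by left; rewrite /L -ln_1; apply: ln_increasing; lra.
have HLp : 0 <= L / p by apply: Rmult_le_pos => //; left; apply: Rinv_0_lt_compat; lra.
set A := sqrt (L / p) * normGF Z.
set B := L / p * normGinf Z.
have HA : 0 <= A by apply: Rmult_le_pos; [apply: sqrt_pos | apply: sqrt_pos].
have HB : 0 <= B by apply: Rmult_le_pos => //; apply: bigmax_ge0.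
set F := fun (k : ('I_d * 'I_n) * bool * bool) (Om : {set ('I_d * 'I_n)%type}) =>
  6 * (A + B) < \big[Rplus/0]_(x : ('I_d * 'I_n)%type)
                   ((if x \in Om then / p - 1 else -1) * rr Z k x).
rewrite bern_probE; apply: Rle_ge.
apply: Rle_trans (bprob_union (F := F) Hp' _).
  have Hk : forall k, bprob p (F k) <= exp (- (3 * L)).
    move=> k; apply: chernoff => //.
      apply: Rle_trans (_ : _ <= L * (normGF Z * normGF Z)) _.
        apply: Rmult_le_compat_l => //; rewrite normGF_sq.
        apply: Rsum_le => x _; exact: rr_sq.
      right; rewrite /A.
      have E1 : sqrt (L / p) * normGF Z * (sqrt (L / p) * normGF Z)
               = (sqrt (L / p) * sqrt (L / p)) * (normGF Z * normGF Z) by ring.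
      rewrite E1 sqrt_sqrt //; field; lra.
    move=> x; rewrite /B.
    have -> : p * (L / p * normGinf Z) = L * normGinf Z by field; lra.
    apply: Rmult_le_compat_l => //; exact: rr_abs.
  apply: Rplus_le_compat_l; apply: Ropp_le_contravar.
  apply: Rle_trans (_ : _ <= \big[Rplus/0]_(k : ('I_d * 'I_n) * bool * bool) exp (- (3 * L))) _.
    by apply: Rsum_le => k _; apply: Hk.
  rewrite big_const iter_sum !card_prod card_bool !card_ord.
  rewrite /Rpower.
  have HNpos : 0 < INR (d * n) by lra.
  rewrite !mult_INR.
  have -> : INR d * INR n = exp L by rewrite /L -mult_INR exp_ln.
  rewrite ln_exp.
  have -> : exp (- (2) * L) = exp L * exp (- (3 * L)) by rewrite -exp_plus; congr exp; ring.
  right; rewrite /=; ring.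
move=> Om HF.
have Ht : 0 <= 6 * (A + B) by lra.
apply: spec_from_hankel => //; first lra.
move=> i m Hm.
set mo := Ordinal Hm.
have Hb : forall b1 b2, (if b2 then -1 else 1) *
    (if b1 then Im (hh n (hfun p Om Z i) m) else Re (hh n (hfun p Om Z i) m)) <= 6 * (A + B).
  move=> b1 b2; have := HF ((i, mo), b1, b2); rewrite /F sum_rr /=; lra.
have H1 := Hb false false; have H2 := Hb false true;
have H3 := Hb true false; have H4 := Hb true true.
rewrite /= in H1 H2 H3 H4.
rewrite /Cnorm2.
set re := Re _ in H1 H2 *; set im := Im _ in H3 H4 *.
nra.
Qed.
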